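(* Let $Q$ be a smooth real function on an open interval, and let $C_1\neq 0$, $C_2$ and $\alpha_0$ be real constants. Let $G$ be an antiderivative $$G(\rho)=\int\frac{Q'(\rho)}{C_1(C_1\rho+C_2)}\,d\rho$$ on an open interval $J$ on which $C_1\rho+C_2\neq 0$. Assume $G$ is invertible on $J$, meaning that it is a diffeomorphism of $J$ onto its image. Then the function $$\rho(t,x)=G^{-1}\!\left(\frac{x+\alpha_0}{C_1}+t\right),$$ defined for all $(t,x)$ with $\frac{x+\alpha_0}{C_1}+t\in G(J)$, is a solution of the non-stationary filtration equation $\rho_t=(Q(\rho))_{xx}$.
   Context: In the paper, $Q(\rho)=\int\frac{k(\rho)\rho p'(\rho)}{\mu(\rho)}d\rho$, where $p$ is the pressure, $k$ the permeability and $\mu$ the viscosity, all given as functions of the density $\rho$ along a thermodynamic process. *)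

(* Defs.v *)
From Stdlib Require Import Reals.
From Coquelicot Require Import Coquelicot.
Open Scope R_scope.

Definition in_oint (a b : Rbar) (r : R) : Prop := Rbar_lt a r /\ Rbar_lt r b.

Definition smooth_on (D : R -> Prop) (f : R -> R) : Prop :=
  forall (n : nat) (r : R), D r -> ex_derive_n f n r.

Definition image (G : R -> R) (D : R -> Prop) (y : R) : Prop :=
  exists r, D r /\ G r = y.

Definition diffeo_onto_image (G Ginv : R -> R) (D : R -> Prop) : Prop :=
  smooth_on D G /\
  smooth_on (image G D) Ginv /\
  (forall r, D r -> Ginv (G r) = r) /\
  (forall y, image G D y -> D (Ginv y) /\ G (Ginv y) = y).

(* Main.v *)
Require Import Defs.
From Stdlib Require Import Reals Lra.
From Coquelicot Require Import Coquelicot.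
Open Scope R_scope.
Lemma ivt_between (G : R -> R) (u v y : R) :
  u < v -> (forall z, u <= z <= v -> continuity_pt G z) ->
  (G u - y) * (G v - y) <= 0 -> exists z, u <= z <= v /\ G z = y.
Proof.
  intros Huv Hc Hp.
  destruct (Req_dec (G u) y) as [E|Nu]. { exists u; split; [lra|auto]. }
  destruct (Req_dec (G v) y) as [E|Nv]. { exists v; split; [lra|auto]. }
  destruct (Rlt_dec (G u) y) as [L|L].
  - assert (y < G v) by nra.
    destruct (Ranalysis5.IVT_interv (fun z => G z - y) u v) as [z [Hz Ez]].
    + intros a Ha. apply continuity_pt_minus; [apply Hc; auto| apply continuity_pt_const; intros ? ?; reflexivity].
    + exact Huv. + simpl; lra. + simpl; lra.
    + exists z; split; [auto|simpl in Ez; lra].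
  - assert (y < G u) by lra. assert (G v < y) by nra.
    destruct (Ranalysis5.IVT_interv (fun z => y - G z) u v) as [z [Hz Ez]].
    + intros a Ha. apply continuity_pt_minus; [apply continuity_pt_const; intros ? ?; reflexivity|apply Hc; auto].
    + exact Huv. + simpl; lra. + simpl; lra.
    + exists z; split; [auto|simpl in Ez; lra].
Qed.

Lemma open_image (G : R -> R) (J : R -> Prop) (r0 : R) :
  J r0 -> locally r0 J ->
  (forall r, J r -> continuity_pt G r) ->
  (forall r s, J r -> J s -> G r = G s -> r = s) ->
  locally (G r0) (fun y => exists r, J r /\ G r = y).
Proof.
  intros J0 [eps Heps] Hc Hinj.
  set (r1 := r0 - eps/2). set (r2 := r0 + eps/2).
  assert (Hin : forall z, r1 <= z <= r2 -> J z).
  { intros z Hz. apply Heps. change (Rabs (z - r0) < eps).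
    pose proof (cond_pos eps). unfold r1, r2 in Hz. apply Rabs_def1; lra. }
  assert (He := cond_pos eps).
  assert (J1 : J r1) by (apply Hin; unfold r1, r2; lra).
  assert (J2 : J r2) by (apply Hin; unfold r1, r2; lra).
  assert (Hcc : forall u v, r1 <= u -> v <= r2 -> forall z, u <= z <= v -> continuity_pt G z).
  { intros u v Hu Hv z Hz; apply Hc, Hin; lra. }
  set (A := G r1 - G r0). set (B := G r2 - G r0).
  assert (NA : A <> 0).
  { unfold A; intro E. assert (r1 = r0) by (apply Hinj; auto; lra). unfold r1 in *; lra. }
  assert (NB : B <> 0).
  { unfold B; intro E. assert (r2 = r0) by (apply Hinj; auto; lra). unfold r2 in *; lra. }
  assert (AB : A * B < 0).
  { destruct (Rlt_dec (A*B) 0) as [h|h]; [exact h|exfalso].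
    assert (AB0 : A * B > 0).
    { destruct (Rtotal_order (A*B) 0) as [?|[E|?]]; try lra.
      apply Rmult_integral in E; tauto. }
    destruct (Rle_dec (A*(A-B)) 0) as [h1|h1].
    - destruct (ivt_between G r0 r2 (G r1)) as [z [Hz Ez]].
      + unfold r2; lra. + apply Hcc; unfold r1, r2; lra.
      + unfold A, B in h1. nra.
      + assert (z = r1) by (apply Hinj; auto; apply Hin; unfold r1,r2 in *; lra).
        unfold r1 in *; lra.
    - destruct (ivt_between G r1 r0 (G r2)) as [z [Hz Ez]].
      + unfold r1; lra. + apply Hcc; unfold r1, r2; lra.
      + unfold A, B in h1, AB0. nra.
      + assert (z = r2) by (apply Hinj; auto; apply Hin; unfold r1,r2 in *; lra).
        unfold r2 in *; lra. }
  assert (Hd : 0 < Rmin (Rabs A) (Rabs B)).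
  { apply Rmin_glb_lt; apply Rabs_pos_lt; auto. }
  exists (mkposreal _ Hd). intros y Hy. change (Rabs (y - G r0) < Rmin (Rabs A) (Rabs B)) in Hy.
  destruct (ivt_between G r1 r2 y) as [z [Hz Ez]].
  + unfold r1, r2; lra. + apply Hcc; lra.
  + assert (Hy1 : Rabs (y - G r0) < Rabs A) by (eapply Rlt_le_trans; [exact Hy|apply Rmin_l]).
    assert (Hy2 : Rabs (y - G r0) < Rabs B) by (eapply Rlt_le_trans; [exact Hy|apply Rmin_r]).
    unfold A, B in *.
    revert Hy1 Hy2 AB. unfold Rabs; repeat destruct Rcase_abs; intros; nra.
  + exists z; split; [apply Hin; auto|auto].
Qed.

Theorem mainTheorem2
  (a b c d : Rbar) (Q G Ginv : R -> R) (C1 C2 alpha0 : R) :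
  smooth_on (in_oint a b) Q ->
  C1 <> 0 ->
  (forall r, in_oint c d r -> in_oint a b r) ->
  (forall r, in_oint c d r -> C1 * r + C2 <> 0) ->
  (forall r, in_oint c d r ->
     is_derive G r (Derive Q r / (C1 * (C1 * r + C2)))) ->
  diffeo_onto_image G Ginv (in_oint c d) ->
  let rho := fun t x => Ginv ((x + alpha0) / C1 + t) in
  forall t x : R,
    image G (in_oint c d) ((x + alpha0) / C1 + t) ->
    ex_derive (fun s => rho s x) t /\
    locally x (fun z => ex_derive (fun w => Q (rho t w)) z) /\
    is_derive (fun z => Derive (fun w => Q (rho t w)) z) x
              (Derive (fun s => rho s x) t).
Proof.
  intros HQ HC1 HJI HJ0 HG [_ [HGi [HGG HGiG]]] rho t x Him.
  set (J := in_oint c d) in *.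
  assert (Jopen : forall r, J r -> locally r J).
  { intros r Hr. apply (@open_and R_UniformSpace (fun u : R => Rbar_lt c u) (fun u : R => Rbar_lt u d)
      (open_Rbar_gt c) (open_Rbar_lt d) r Hr). }
  assert (Gi1 : forall y, image G J y -> ex_derive Ginv y).
  { intros y Hy. exact (HGi 1%nat y Hy). }
  assert (Q1 : forall r, J r -> ex_derive Q r).
  { intros r Hr. exact (HQ 1%nat r (HJI r Hr)). }
  assert (Inv : forall r, J r ->
     Derive Ginv (G r) * (Derive Q r / (C1 * (C1 * r + C2))) = 1).
  { intros r Hr.
    assert (D1 : is_derive (fun s => Ginv (G s)) r
                   (scal (Derive Q r / (C1 * (C1 * r + C2))) (Derive Ginv (G r)))).
    { apply (is_derive_comp Ginv G r (Derive Ginv (G r))); [|apply HG; auto].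
      apply Derive_correct, Gi1. exists r; split; auto. }
    assert (D2 : is_derive (fun s => s) r (scal (Derive Q r / (C1 * (C1 * r + C2))) (Derive Ginv (G r)))).
    { eapply is_derive_ext_loc; [|exact D1].
      destruct (Jopen r Hr) as [e He]. exists e; intros s Hs; apply HGG, He; auto. }
    assert (D3 : is_derive (fun s : R => s) r 1) by (auto_derive; auto).
    assert (U : scal (Derive Q r / (C1 * (C1 * r + C2))) (Derive Ginv (G r)) = 1).
    { transitivity (Derive (fun s : R => s) r);
        [symmetry; apply is_derive_unique; exact D2 | apply is_derive_unique; exact D3]. }
    unfold scal in U; simpl in U; unfold mult in U; simpl in U.
    rewrite <- U; ring. }
  set (aff := fun w => (w + alpha0) / C1 + t).
  assert (Daff : forall w, is_derive aff w (/ C1)).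
  { intros w. unfold aff. auto_derive; auto. field; auto. }
  assert (Loc : locally x (fun z => image G J (aff z))).
  { destruct Him as [r0 [Hr0 E0]].
    assert (L := open_image G J r0 Hr0 (Jopen r0 Hr0)).
    assert (Lc : locally (G r0) (fun y => exists r, J r /\ G r = y)).
    { apply L.
      - intros r Hr. apply continuity_pt_filterlim. apply (ex_derive_continuous G r).
        eexists; apply HG; auto.
      - intros r s Hr Hs E. rewrite <- (HGG r Hr), <- (HGG s Hs), E; reflexivity. }
    rewrite E0 in Lc.
    assert (Ca : filterlim aff (locally x) (locally (aff x))).
    { apply continuity_pt_filterlim, continuity_pt_filterlim. apply (ex_derive_continuous (K:=R_AbsRing) (V:=R_NormedModule)). eexists; apply Daff. }
    exact (Ca _ Lc). }
  assert (Dz : forall z, image G J (aff z) ->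
      is_derive (fun w => Q (rho t w)) z (C1 * Ginv (aff z) + C2)).
  { intros z Hz. destruct (HGiG _ Hz) as [Jr Gr].
    set (r := Ginv (aff z)) in *.
    assert (Hc : is_derive (fun w => Q (Ginv (aff w))) z
                   (scal (scal (/C1) (Derive Ginv (aff z))) (Derive Q r))).
    { apply (is_derive_comp Q (fun w => Ginv (aff w))).
      - apply Derive_correct, Q1; auto.
      - apply (is_derive_comp Ginv aff); [apply Derive_correct, Gi1; auto| apply Daff]. }
    unfold rho. fold aff.
    replace (C1 * r + C2) with (scal (scal (/C1) (Derive Ginv (aff z))) (Derive Q r)); [exact Hc|].
    pose proof (Inv r Jr) as I. rewrite Gr in I.
    pose proof (HJ0 r Jr).
    unfold scal; simpl; unfold mult; simpl.
    assert (K : Derive Ginv (aff z) * Derive Q r = C1 * (C1 * r + C2)).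
    { replace (Derive Ginv (aff z) * Derive Q r) with
        ((Derive Ginv (aff z) * (Derive Q r / (C1 * (C1 * r + C2)))) * (C1 * (C1 * r + C2)))
        by (field; split; auto).
      rewrite I; ring. }
    rewrite Rmult_assoc, K. field. auto. }
  assert (Dt : is_derive (fun s => rho s x) t (Derive Ginv (aff x))).
  { unfold rho.
    assert (H1 := is_derive_comp Ginv (fun s => (x + alpha0) / C1 + s) t (Derive Ginv (aff x)) 1).
    assert (H2 : is_derive (fun s : R => (x + alpha0) / C1 + s) t 1) by (auto_derive; auto; ring).
    specialize (H1 (Derive_correct _ _ (Gi1 _ Him)) H2).
    unfold scal in H1; simpl in H1; unfold mult in H1; simpl in H1.
    rewrite Rmult_1_l in H1. exact H1. }
  split; [eexists; exact Dt|split].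
  - eapply filter_imp; [|exact Loc]. intros z Hz. eexists; apply Dz; auto.
  - replace (Derive _ t) with (Derive Ginv (aff x)) by (symmetry; apply is_derive_unique; exact Dt).
    apply (is_derive_ext_loc (fun z => C1 * Ginv (aff z) + C2)).
    + eapply filter_imp; [|exact Loc]. intros z Hz. symmetry; apply is_derive_unique, Dz; auto.
    + assert (H2 : is_derive (fun z => Ginv (aff z)) x (scal (/C1) (Derive Ginv (aff x)))).
      { apply (is_derive_comp Ginv aff); [apply Derive_correct, Gi1; exact Him|apply Daff]. }
      replace (Derive Ginv (aff x)) with (C1 * scal (/C1) (Derive Ginv (aff x)) + 0)
        by (unfold scal; simpl; unfold mult; simpl; field; auto).
      apply (is_derive_plus (fun z => C1 * Ginv (aff z)) (fun _ => C2)).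
      * apply (is_derive_scal (fun z => Ginv (aff z))); exact H2.
      * auto_derive; auto.
Qed.
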